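(* For all $P,Q\in\Gamma_n$, $$0\le M_{SA}(P\|Q)\le \tfrac13 M_{SH}(P\|Q)\qquad\text{and}\qquad 0\le \xi_{SA}(P\|Q)\le \tfrac13\xi_{SH}(P\|Q).$$
   Context: $\Gamma_n=\{P=(p_1,\dots,p_n): p_i>0,\ \sum_i p_i=1\}$, $n\ge2$. For $f:(0,\infty)\to\mathbb{R}$, $C_f(P\|Q)=\sum_{i=1}^n q_i f(p_i/q_i)$; for differentiable $f$, $E_f(P\|Q)=\sum_{i=1}^n (p_i-q_i) f'(p_i/q_i)$ and $\xi_f=E_f-C_f$. With $f_{SA}(x)=\sqrt{(x^2+1)/2}-\frac{x+1}{2}$ and $f_{SH}(x)=\sqrt{(x^2+1)/2}-\frac{2x}{x+1}$: $M_{SA}=C_{f_{SA}}=\sum_i\sqrt{(p_i^2+q_i^2)/2}-1$, $M_{SH}=C_{f_{SH}}=\sum_i\big(\sqrt{(p_i^2+q_i^2)/2}-\frac{2p_iq_i}{p_i+q_i}\big)$, $\xi_{SA}=\xi_{f_{SA}}$, $\xi_{SH}=\xi_{f_{SH}}$. *)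

(* Defs.v *)
From HB Require Import structures.
From mathcomp Require Import all_boot all_order all_algebra.
From mathcomp Require Import all_classical all_reals all_analysis.
Set Implicit Arguments. Unset Strict Implicit. Unset Printing Implicit Defensive.
Import Order.TTheory GRing.Theory Num.Theory.
Local Open Scope ring_scope.

Definition Gamma {R : realType} (n : nat) (P : 'I_n -> R) : Prop :=
  (forall i, 0 < P i) /\ \sum_(i < n) P i = 1.

Definition Cf {R : realType} {n : nat} (f : R -> R) (P Q : 'I_n -> R) : R :=
  \sum_(i < n) Q i * f (P i / Q i).

Definition Ef {R : realType} {n : nat} (f : R -> R) (P Q : 'I_n -> R) : R :=
  \sum_(i < n) (P i - Q i) * (derive1 f (P i / Q i)).

Definition xi_f {R : realType} {n : nat} (f : R -> R) (P Q : 'I_n -> R) : R :=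
  Ef f P Q - Cf f P Q.

Definition f_SA {R : realType} (x : R) : R :=
  Num.sqrt ((x ^+ 2 + 1) / 2) - (x + 1) / 2.

Definition f_SH {R : realType} (x : R) : R :=
  Num.sqrt ((x ^+ 2 + 1) / 2) - (2 * x) / (x + 1).

Definition M_SA {R : realType} {n : nat} (P Q : 'I_n -> R) : R := Cf f_SA P Q.
Definition M_SH {R : realType} {n : nat} (P Q : 'I_n -> R) : R := Cf f_SH P Q.
Definition xi_SA {R : realType} {n : nat} (P Q : 'I_n -> R) : R := xi_f f_SA P Q.
Definition xi_SH {R : realType} {n : nat} (P Q : 'I_n -> R) : R := xi_f f_SH P Q.

(* Main.v *)
Require Import Defs.
From HB Require Import structures.
From mathcomp Require Import all_boot all_order all_algebra.
From mathcomp Require Import all_classical all_reals all_analysis.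
From mathcomp Require Import ring lra.
Import Order.TTheory GRing.Theory Num.Theory.
Local Open Scope ring_scope.

Section S.
Variable R : realType.
Local Notation S y := (Num.sqrt ((y ^+ 2 + 1) / 2)).

Lemma dsq (x : R) : is_derive x 1 (fun y : R => S y) (x / (2 * S x)).
Proof.
have h1 : is_derive x 1 (fun y : R => (y ^+ 2 + 1) / 2) x.
  have -> : (fun y : R => (y ^+ 2 + 1) / 2) = (2^-1 : R) *: ((@id R) ^+ 2 + cst 1).
    by apply/funext => y /=; rewrite /GRing.scale /= mulrC.
  apply: is_derive_eq.
  rewrite addr0 expr1 -[LHS]/(2^-1 * ((2*x) * 1)) mulr1 mulrA mulVf ?mul1r //.
have h2 : is_derive ((x ^+ 2 + 1) / 2) 1 Num.sqrt (2 * S x)^-1.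
  apply: is_derive1_sqrt. by rewrite divr_gt0 // ltr_wpDl ?sqr_ge0.
have := @is_derive1_comp R Num.sqrt (fun y : R => (y ^+ 2 + 1) / 2) x _ _ h2 h1.
by rewrite mulrC.
Qed.

Lemma dlin (x : R) : is_derive x 1 (fun y : R => 2 * y) 2.
Proof.
have -> : (fun y : R => 2 * y) = (2 : R) *: (@id R) by apply/funext.
apply: is_derive_eq. exact: mulr1.
Qed.

Lemma dhalf (x : R) : is_derive x 1 (fun y : R => (y + 1) / 2) (1/2).
Proof.
have -> : (fun y : R => (y + 1) / 2) = (2^-1 : R) *: ((@id R) + cst 1).
  by apply/funext => y /=; rewrite /GRing.scale /= mulrC.
apply: is_derive_eq. rewrite addr0 mul1r. exact: mulr1.
Qed.

Lemma dinv (x : R) : 0 < x -> is_derive x 1 (fun y : R => (y + 1)^-1) (- (x+1)^-2).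
Proof.
move=> x0.
have h : is_derive x 1 (fun y : R => y + 1) 1.
  have -> : (fun y : R => y + 1) = (@id R) + cst 1 by apply/funext.
  apply: is_derive_eq. by rewrite addr0.
have x1 : x + 1 != 0 by rewrite gt_eqF // addr_gt0.
have H := @is_deriveV R (fun y : R => y + 1) x 1 1 x1 h.
exact: (is_derive_eq H (mulr1 _)).
Qed.

Lemma derSA (x : R) : 0 < x -> derive1 f_SA x = x / (2 * S x) - 1/2.
Proof.
move=> x0; rewrite derive1E.
have -> : f_SA = (fun y : R => S y) - (fun y : R => (y + 1) / 2) by apply/funext.
apply: derive_val. exact: (is_deriveB (dsq x) (dhalf x)).
Qed.

Lemma derSH (x : R) : 0 < x -> derive1 f_SH x = x / (2 * S x) - 2 / (x + 1) ^+ 2.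
Proof.
move=> x0; rewrite derive1E.
have -> : f_SH = (fun y : R => S y) - ((fun y : R => 2 * y) * (fun y : R => (y + 1)^-1)).
  by apply/funext.
have H := is_deriveB (dsq x) (is_deriveM (dlin x) (@dinv x x0)).
apply: derive_val. apply: (is_derive_eq H).
rewrite /GRing.scale /=.
have x1 : x + 1 != 0 by rewrite gt_eqF // addr_gt0.
congr (_ - _). field. by rewrite x1.
Qed.


Lemma pt (x : R) : 0 < x ->
  [/\ 0 <= f_SA x, f_SA x <= f_SH x / 3,
      0 <= (x - 1) * derive1 f_SA x - f_SA x &
      (x - 1) * derive1 f_SA x - f_SA x <= ((x - 1) * derive1 f_SH x - f_SH x) / 3].
Proof.
move=> x0; rewrite derSA // derSH // /f_SA /f_SH.
set s := S x.
have hs : 0 < s by rewrite sqrtr_gt0 divr_gt0 // ltr_wpDl ?sqr_ge0.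
have E0 : x ^+ 2 + 1 - 2 * s ^+ 2 = 0.
  rewrite /s sqr_sqrtr; last by rewrite divr_ge0 // addr_ge0 ?sqr_ge0.
  by field.
have a0 : 0 < x + 1 by rewrite addr_gt0.
have key : 0 <= 2 * s - (x + 1).
  have h1 := sqr_ge0 (x - 1).
  have h2 : (2 * s - (x + 1)) * (2 * s + (x + 1)) = (x - 1) ^+ 2 - 2 * (x ^+ 2 + 1 - 2 * s ^+ 2) by ring.
  rewrite E0 mulr0 subr0 in h2.
  nra.
have sn : s != 0 by rewrite gt_eqF.
have an : x + 1 != 0 by rewrite gt_eqF.
split.
- lra.
- rewrite -subr_ge0.
  have -> : (s - 2 * x / (x + 1)) / 3 - (s - (x + 1) / 2) =
    (2 * s - (x + 1)) ^+ 2 / (6 * (x + 1)) + (x ^+ 2 + 1 - 2 * s ^+ 2) / (3 * (x + 1)).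
    by field; rewrite an.
  rewrite E0 mul0r addr0 divr_ge0 ?sqr_ge0 //. lra.
- have -> : (x - 1) * (x / (2 * s) - 1 / 2) - (s - (x + 1) / 2) =
    (2 * s - (x + 1)) / (2 * s) + (x ^+ 2 + 1 - 2 * s ^+ 2) / (2 * s).
    by field; rewrite sn.
  rewrite E0 mul0r addr0 divr_ge0 //. lra.
- rewrite -subr_ge0.
  have -> : ((x - 1) * (x / (2 * s) - 2 / (x + 1) ^+ 2) - (s - 2 * x / (x + 1))) / 3 -
    ((x - 1) * (x / (2 * s) - 1 / 2) - (s - (x + 1) / 2)) =
    (2 * (2 * s - (x + 1)) ^+ 2 * (s + (x + 1)) - (x ^+ 2 + 1 - 2 * s ^+ 2) * (2 * (x + 1) ^+ 2 - 4 * s))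
      / (6 * s * (x + 1) ^+ 2).
    by field; rewrite sn an.
  rewrite E0 mul0r subr0 divr_ge0 //.
    by rewrite mulr_ge0 // ?mulr_ge0 ?sqr_ge0 //; lra.
  by rewrite mulr_ge0 ?sqr_ge0 //; lra.
Qed.
End S.

Theorem proposition5p1 (R : realType) (n : nat) (P Q : 'I_n -> R) :
  (2 <= n)%N -> Gamma P -> Gamma Q ->
  (0 <= M_SA P Q /\ M_SA P Q <= M_SH P Q / 3) /\
  (0 <= xi_SA P Q /\ xi_SA P Q <= xi_SH P Q / 3).
Proof.
move=> _ [Pp _] [Qp _].
have X : forall i, 0 < P i / Q i by move=> i; rewrite divr_gt0.
have xiE : forall f : R -> R, xi_f f P Q =
    \sum_(i < n) Q i * ((P i / Q i - 1) * derive1 f (P i / Q i) - f (P i / Q i)).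
  move=> f; rewrite /xi_f /Ef /Cf -sumrB; apply: eq_bigr => i _.
  have qn : Q i != 0 by rewrite gt_eqF.
  have -> : P i - Q i = Q i * (P i / Q i - 1) by field.
  ring.
split; split.
- rewrite /M_SA /Cf; apply: sumr_ge0 => i _; apply: mulr_ge0; first exact: ltW.
  by case: (@pt R _ (X i)).
- rewrite /M_SH /M_SA /Cf mulr_suml; apply: ler_sum => i _.
  rewrite -mulrA ler_pM2l //; by case: (@pt R _ (X i)).
- rewrite /xi_SA xiE; apply: sumr_ge0 => i _; apply: mulr_ge0; first exact: ltW.
  by case: (@pt R _ (X i)).
- rewrite /xi_SH /xi_SA !xiE mulr_suml; apply: ler_sum => i _.
  rewrite -mulrA ler_pM2l //; by case: (@pt R _ (X i)).
Qed.
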